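(* Let $D=(V,A)$ be a digraph with minimum dicut size $\tau$, and let $\vec G=(V,A\cup A^{-1})$ with weight $w^D$ be as in the context. For every integer $k\le\tau$, $D$ contains $k$ pairwise arc-disjoint dijoins if and only if $\vec G$ with weight $w^D$ can pack $k$ strongly connected digraphs, i.e. there exist arc subsets $F_1,\dots,F_k\subseteq A\cup A^{-1}$, each satisfying $\delta^+_{\vec G}(U)\cap F_i\neq\emptyset$ for all $\emptyset\neq U\subsetneq V$, such that every arc $e$ of $\vec G$ belongs to at most $w^D_e$ of the sets $F_i$.
   Context: Digraphs are finite and loopless; parallel arcs allowed. For $\emptyset\neq U\subsetneq V$, $\delta^+(U)$ / $\delta^-(U)$ denote arcs leaving/entering $U$. A dicut of $D$ is $\delta^+_D(U)$ with $\emptyset\neq U\subsetneq V$ and $\delta^-_D(U)=\emptyset$; a dijoin is an arc set meeting every dicut; ''$D$ has minimum dicut size $\tau$'' means $D$ has at least one dicut and the minimum number of arcs in a dicut is $\tau$. $A^{-1}$ denotes the set of reverses of the arcs of $A$ (one reverse arc $a^{-1}$ per arc $a\in A$, considered distinct from arcs of $A$). The digraph $\vec G$ has vertex set $V$ and arc set $A\cup A^{-1}$, and the weight $w^D$ is defined by $w^D_a=\tau$ for $a\in A$ and $w^D_{a^{-1}}=1$ for $a^{-1}\in A^{-1}$. *)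

(* Defs.v *)
From mathcomp Require Import all_boot.
Set Implicit Arguments. Unset Strict Implicit. Unset Printing Implicit Defensive.

(* A digraph D = (V, A): finite vertex type V, finite arc type A (parallel arcs
   allowed), with tail/head maps; loopless means tl a != hd a. *)

Definition delta_out_gen (V E : finType) (t h : E -> V) (U : {set V}) : {set E} :=
  [set a | (t a \in U) && (h a \notin U)].

Section Digraphs.
Variables (V Ar : finType) (tl hd : Ar -> V).

Definition loopless : Prop := forall a, tl a != hd a.

Definition delta_out (U : {set V}) : {set Ar} := delta_out_gen tl hd U.
Definition delta_in (U : {set V}) : {set Ar} :=
  [set a | (tl a \notin U) && (hd a \in U)].

Definition proper_nonempty (U : {set V}) : bool := (U != set0) && (U != setT).

Definition dicut_shore (U : {set V}) : bool :=
  proper_nonempty U && (delta_in U == set0).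

Definition is_dicut (C : {set Ar}) : Prop :=
  exists U, dicut_shore U /\ C = delta_out U.

Definition is_dijoin (J : {set Ar}) : Prop :=
  forall C, is_dicut C -> [exists a, (a \in J) && (a \in C)].

Definition min_dicut_size (tau : nat) : Prop :=
  (exists C, is_dicut C) /\
  (exists C, is_dicut C /\ #|C| = tau) /\
  (forall C, is_dicut C -> tau <= #|C|).

(* The digraph vec G on V with arcs A + A^{-1}: inl a = a, inr a = a^{-1}. *)
Definition vtl (e : Ar + Ar) : V := match e with inl a => tl a | inr a => hd a end.
Definition vhd (e : Ar + Ar) : V := match e with inl a => hd a | inr a => tl a end.

Definition wD (tau : nat) (e : Ar + Ar) : nat :=
  match e with inl _ => tau | inr _ => 1 end.

Definition meets_all_out_cuts (F : {set Ar + Ar}) : Prop :=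
  forall U : {set V}, proper_nonempty U ->
    [exists e, (e \in F) && (e \in delta_out_gen vtl vhd U)].

End Digraphs.

(* Main.v *)
Require Import Defs.
From mathcomp Require Import all_boot.

Lemma pn_compl (V : finType) (U : {set V}) :
  proper_nonempty U -> proper_nonempty (~: U).
Proof.
case/andP=> n0 nT; apply/andP; split.
  by apply: contra nT => /eqP h; rewrite -(setCK U) h setC0.
by apply: contra n0 => /eqP h; rewrite -(setCK U) h setCT.
Qed.

Theorem proposition2 (V Ar : finType) (tl hd : Ar -> V) (tau : nat) :
  loopless tl hd ->
  min_dicut_size tl hd tau ->
  forall k : nat, k <= tau ->
  ((exists J : 'I_k -> {set Ar},
      (forall i, is_dijoin tl hd (J i)) /\
      (forall i j, i != j -> [disjoint J i & J j]))
   <->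
   (exists F : 'I_k -> {set Ar + Ar},
      (forall i, meets_all_out_cuts tl hd (F i)) /\
      (forall e : Ar + Ar, #|[set i | e \in F i]| <= wD tau e))).
Proof.
move=> _ _ k hk; split.
- case=> J [HJ HD].
  exists (fun i => [set e | match e with inl _ => true | inr a => a \in J i end]).
  split.
  + move=> i U hU.
    case: (boolP [exists a, (tl a \in U) && (hd a \notin U)]).
      case/existsP=> a ha; apply/existsP; exists (inl a).
      by rewrite /delta_out_gen !inE /=.
    rewrite negb_exists => /forallP hn.
    have hsh : dicut_shore tl hd (~: U).
      rewrite /dicut_shore pn_compl //=; apply/eqP/setP=> a; rewrite !inE.
      by have := hn a; rewrite negb_and negbK; case: (tl a \in U); case: (hd a \in U).
    have /existsP [a /andP [ha1 ha2]] := HJ i _ (ex_intro _ (~: U) (conj hsh erefl)).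
    apply/existsP; exists (inr a).
    by rewrite /delta_out /delta_out_gen !inE /= in ha2 *; rewrite ha1 /=; rewrite negbK in ha2; rewrite andbC.
  + case=> [a|a] /=.
      by apply: leq_trans (max_card _) _; rewrite card_ord.
    rewrite leqNgt; apply/negP=> /card_gt1P [i [j [Hi Hj Hij]]].
    rewrite !inE in Hi Hj.
    by rewrite (disjointFr (HD i j Hij) Hi) in Hj.
- case=> F [HF HW].
  exists (fun i => [set a | inr a \in F i]); split.
  + move=> i C [U [hsh ->]].
    move/andP: hsh => [hp /eqP din].
    have /existsP [[a|a] /andP [Hin Hd]] := HF i (~: U) (@pn_compl _ U hp).
      rewrite /delta_out_gen !inE /= negbK in Hd.
      have : a \in delta_in tl hd U by rewrite /delta_in inE.
      by rewrite din inE.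
    rewrite /delta_out_gen !inE /= negbK in Hd.
    apply/existsP; exists a; rewrite /delta_out /delta_out_gen !inE Hin /=.
    by rewrite andbC.
  + move=> i j Hij; rewrite disjoints_subset; apply/subsetP=> a Hi.
    rewrite !inE in Hi *; apply/negP=> Hj.
    have := HW (inr a); rewrite leqNgt => /negP; apply.
    by apply/card_gt1P; exists i, j; rewrite !inE.
Qed.
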